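(* Let $A=A(u,v)$ be a $\mathbb{C}^k$-valued formal power series mapping, $u,v\in \mathbb{C}^k$, satisfying $\det A_u(u,v)\not\equiv 0$ and $A(0,v)\equiv 0$. Assume that $\mathrm{ord}_u\left(\det A_u(u,v)\right)\leq \nu$ for some nonnegative integer $\nu$. Then for every nonnegative integer $r$ and every formal power series $\psi (t,v)\in \mathbb{C}[[t,v]]$, $t\in \mathbb{C}^k$, if $\mathrm{ord}_u\left(\psi (A(u,v),v)\right) > r(\nu +1)$, then $\mathrm{ord}_t\, \psi (t,v)> r$.
   Context: For $S(x,x')\in\mathbb{C}[[x,x']]$, $\mathrm{ord}_x S$ denotes the order of $S$ viewed as a power series in $x$ with coefficients in $\mathbb{C}[[x']]$ (i.e. the smallest total degree in $x$ of a nonzero term; $+\infty$ if $S=0$). $A_u$ denotes the Jacobian matrix of $A$ with respect to $u$. *)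

(* Defs.v *)
From mathcomp Require Import all_boot all_algebra.
From mathcomp Require Import all_fingroup Rstruct complex.
From Stdlib Require Reals.
Set Implicit Arguments. Unset Strict Implicit. Unset Printing Implicit Defensive.
Import GRing.Theory.
Local Open Scope ring_scope.

Definition CC : fieldType := complex Rdefinitions.R.

Definition midx (k : nat) := {ffun 'I_k -> nat}.
Definition mdeg k (a : midx k) : nat := (\sum_(i < k) a i)%N.
Definition mzero k : midx k := [ffun => 0%N].
Definition madd k (a b : midx k) : midx k := [ffun i => (a i + b i)%N].
Definition msub k (a b : midx k) : midx k := [ffun i => (a i - b i)%N].
Definition munit k (j : 'I_k) : midx k := [ffun i => nat_of_bool (i == j)].

(* all multi-indices c with c <= a componentwise (each exactly once) *)
Definition below k (a : midx k) : seq (midx k) :=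
  map (fun c : {ffun 'I_k -> 'I_(mdeg a).+1} => [ffun i => nat_of_ord (c i)])
      (enum (fun c : {ffun 'I_k -> 'I_(mdeg a).+1} => [forall i, (c i <= a i)%N])).

(* all multi-indices c with |c| <= |a| (each exactly once) *)
Definition degbelow k (a : midx k) : seq (midx k) :=
  map (fun c : {ffun 'I_k -> 'I_(mdeg a).+1} => [ffun i => nat_of_ord (c i)])
      (enum (fun c : {ffun 'I_k -> 'I_(mdeg a).+1} =>
               (\sum_(i < k) nat_of_ord (c i) <= mdeg a)%N)).

(* A formal power series f(x,v) in C[[x,v]], x,v in C^k, given by its
   coefficients: f a b = coefficient of x^a v^b. *)
Definition ps (k : nat) := midx k -> midx k -> CC.

Definition pszero k : ps k := fun _ _ => 0.
Definition psone k : ps k := fun a b => if (mdeg a + mdeg b == 0)%N then 1 else 0.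
Definition psadd k (f g : ps k) : ps k := fun a b => f a b + g a b.
Definition psscale k (c : CC) (f : ps k) : ps k := fun a b => c * f a b.
Definition psmul k (f g : ps k) : ps k := fun a b =>
  \sum_(a1 <- below a) \sum_(b1 <- below b) f a1 b1 * g (msub a a1) (msub b b1).
Definition psexp k (f : ps k) (n : nat) : ps k := iter n (psmul f) (@psone k).

Definition psderu k (j : 'I_k) (f : ps k) : ps k := fun a b =>
  (a j).+1%:R * f (madd a (munit j)) b.

Definition jacdet k (A : 'I_k -> ps k) : ps k :=
  \big[@psadd k/@pszero k]_(s : 'S_k)
     psscale ((-1) ^+ s) (\big[@psmul k/@psone k]_(i < k) psderu (s i) (A i)).

Definition mpow k (A : 'I_k -> ps k) (al : midx k) : ps k :=
  \big[@psmul k/@psone k]_(i < k) psexp (A i) (al i).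

(* This is the formal substitution;
   the sum over the t-exponents al is restricted to |al| <= |a|, which is exact
   when A(0,v) = 0 (then A^al has u-order >= |al|). *)
Definition pscomp k (psi : ps k) (A : 'I_k -> ps k) : ps k := fun a b =>
  \sum_(al <- degbelow a) \sum_(be <- below b)
     psi al be * mpow A al a (msub b be).

(* "ord_x f > n": every coefficient of f of total degree <= n in x vanishes.
   Hence ord_x f <= n  iff  ~ ordx_gt f n. *)
Definition ordx_gt k (f : ps k) (n : nat) : Prop :=
  forall a b, (mdeg a <= n)%N -> f a b = 0.

Definition ps_nonzero k (f : ps k) : Prop := exists a b, f a b != 0.

(* Main.v *)
Require Import Defs.
From HB Require Import structures.
From mathcomp Require Import all_boot all_algebra all_fingroup.
From mathcomp Require Import Rstruct complex.
From mathcomp Require Import boolp.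
From mathcomp Require Import zify.
From Stdlib Require Import Classical.
Set Implicit Arguments. Unset Strict Implicit. Unset Printing Implicit Defensive.
Import GRing.Theory.
Local Open Scope ring_scope.

Ltac genff := repeat match goal with |- context [@fun_of_fin _ _ _ ?f ?i] =>
  let x := fresh "x" in move: (f i) => x end.
Ltac mlia := rewrite ?ffunE /=; genff; lia.

Section Comb.
Variable k : nat.
Implicit Types a c d e : midx k.

Definition mle (c a : midx k) : bool := [forall i, (c i <= a i)%N].

Lemma mleP c a : reflect (forall i, (c i <= a i)%N) (mle c a).
Proof. exact: forallP. Qed.

Lemma le_mdeg a i : (a i <= mdeg a)%N.
Proof. by rewrite /mdeg (bigD1 i) //= leq_addr. Qed.

Lemma mdegD c d : mdeg (madd c d) = (mdeg c + mdeg d)%N.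
Proof. by rewrite /mdeg -big_split; apply: eq_bigr => i _; rewrite ffunE. Qed.

Lemma mdegB a c : mle c a -> mdeg (msub a c) = (mdeg a - mdeg c)%N.
Proof.
move/mleP=> H; apply/eqP; rewrite -(eqn_add2r (mdeg c)) subnK.
  rewrite -mdegD /mdeg; apply/eqP/eq_bigr=> i _; rewrite !ffunE subnK //.
by rewrite /mdeg; apply: leq_sum.
Qed.

Lemma mle_mdeg c a : mle c a -> (mdeg c <= mdeg a)%N.
Proof. by move/mleP=> H; apply: leq_sum. Qed.

Lemma mdeg0 a : (mdeg a == 0%N) = (a == mzero k).
Proof.
apply/idP/eqP=> [H|->].
  apply/ffunP=> i; rewrite ffunE; have := le_mdeg a i; rewrite (eqP H) leqn0 => /eqP ->.
  done.
by rewrite /mdeg big1 // => i _; rewrite ffunE.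
Qed.

Definition bmap a (c : {ffun 'I_k -> 'I_(mdeg a).+1}) : midx k :=
  [ffun i => nat_of_ord (c i)].

Lemma bmap_inj a : injective (@bmap a).
Proof.
move=> x y /ffunP H; apply/ffunP=> i; apply/val_inj; have := H i; by rewrite !ffunE.
Qed.

Lemma mem_below a c : (c \in below a) = mle c a.
Proof.
apply/mapP/idP.
  move=> [x]; rewrite mem_enum => /forallP Hx ->; apply/mleP=> i; rewrite ffunE; exact: Hx.
move=> /mleP H; exists [ffun i => inord (c i) : 'I_(mdeg a).+1].
  rewrite mem_enum; apply/forallP=> i; rewrite ffunE inordK //.
  by rewrite ltnS (leq_trans (H i)) // le_mdeg.
apply/ffunP=> i; rewrite !ffunE inordK //.
by rewrite ltnS (leq_trans (H i)) // le_mdeg.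
Qed.

Lemma uniq_below a : uniq (below a).
Proof. by rewrite map_inj_uniq ?enum_uniq //; exact: bmap_inj. Qed.

Lemma mem_degbelow a c : (c \in degbelow a) = (mdeg c <= mdeg a)%N.
Proof.
apply/mapP/idP.
  move=> [x]; rewrite mem_enum => Hx ->; rewrite /mdeg.
  by rewrite (eq_bigr (fun i => nat_of_ord (x i))) // => i _; rewrite ffunE.
move=> H; exists [ffun i => inord (c i) : 'I_(mdeg a).+1].
  rewrite mem_enum unfold_in /=; rewrite (eq_bigr (fun i => c i)) //.
  move=> i _; rewrite ffunE inordK //.
  by rewrite ltnS (leq_trans (le_mdeg c i)) //.
apply/ffunP=> i; rewrite !ffunE inordK //.
by rewrite ltnS (leq_trans (le_mdeg c i)) //.
Qed.

Lemma uniq_degbelow a : uniq (degbelow a).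
Proof. by rewrite map_inj_uniq ?enum_uniq //; exact: bmap_inj. Qed.

End Comb.

Lemma big_nz (R : nmodType) (T : Type) (s : seq T) (F : T -> R) :
  \sum_(x <- s) F x = \sum_(x <- s | F x != 0) F x.
Proof.
rewrite (bigID (fun x => F x == 0)) /= [X in X + _]big1 ?add0r //.
by move=> x /eqP.
Qed.

Lemma big_supp (R : nmodType) (T : eqType) (s1 s2 : seq T) (F : T -> R) :
  uniq s1 -> uniq s2 -> (forall x, F x != 0 -> (x \in s1) && (x \in s2)) ->
  \sum_(x <- s1) F x = \sum_(x <- s2) F x.
Proof.
move=> u1 u2 H.
rewrite (@big_nz _ _ s1 F) (@big_nz _ _ s2 F).
rewrite -big_filter -[RHS]big_filter; apply: perm_big; apply: uniq_perm; rewrite ?filter_uniq //.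
move=> x; rewrite !mem_filter; case: (boolP (F x == 0)) => //= Hx.
by have /andP[-> ->] := H x Hx.
Qed.

Lemma sumD1 (R : nmodType) (T : eqType) (r : seq T) j (F : T -> R) :
  uniq r -> j \in r -> (forall i, i \in r -> i != j -> F i = 0) ->
  \sum_(i <- r) F i = F j.
Proof.
move=> ur jr H; rewrite (bigD1_seq j) // big1_seq; first exact: addr0.
by move=> i /andP[Hij Hi]; apply: H.
Qed.



Section Reindex.
Variable k : nat.
Implicit Types a c d e : midx k.

Lemma maddK c d : msub (madd c d) c = d.
Proof. by apply/ffunP=> i; mlia. Qed.
Lemma msubDA a c d : msub a (madd c d) = msub (msub a c) d.
Proof. by apply/ffunP=> i; mlia. Qed.
Lemma msubK a c : mle c a -> msub a (msub a c) = c.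
Proof. by move/mleP=> H; apply/ffunP=> i; rewrite !ffunE; have := H i; mlia. Qed.
Lemma maddBK c e : mle c e -> madd c (msub e c) = e.
Proof. by move/mleP=> H; apply/ffunP=> i; rewrite !ffunE; have := H i; mlia. Qed.
Lemma madd_inj c : injective (madd c).
Proof. by move=> x y /ffunP H; apply/ffunP=> i; have := H i; mlia. Qed.
Lemma maddr_inj c : injective ((fun x => madd x c)).
Proof. by move=> x y /ffunP H; apply/ffunP=> i; have := H i; mlia. Qed.
Lemma mle_trans c d e : mle c d -> mle d e -> mle c e.
Proof. move=> /mleP H1 /mleP H2; apply/mleP=> i; exact: leq_trans (H1 i) (H2 i). Qed.
Lemma mle_refl c : mle c c.
Proof. by apply/mleP. Qed.
Lemma mdeg_unit (j : 'I_k) : mdeg (munit j) = 1%N.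
Proof.
rewrite /mdeg (bigD1 j) //= big1 ?ffunE ?eqxx // => i /negbTE H; by rewrite ffunE H.
Qed.

Lemma below_exch (R : nmodType) a (F : midx k -> midx k -> R) :
  \sum_(e <- below a) \sum_(c <- below e) F c e =
  \sum_(c <- below a) \sum_(d <- below (msub a c)) F c (madd c d).
Proof.
transitivity (\sum_(e <- below a) \sum_(c <- below a) (if mle c e then F c e else 0)).
  apply: eq_big_seq => e; rewrite mem_below => Hea.
  rewrite -big_mkcond /= -[RHS]big_filter; apply: perm_big; apply: uniq_perm.
  - exact: uniq_below.
  - by rewrite filter_uniq ?uniq_below.
  move=> c; rewrite mem_filter !mem_below; apply/idP/andP=> [H|[]//].
  by split=> //; apply: mle_trans H Hea.
rewrite exchange_big /=; apply: eq_big_seq => c; rewrite mem_below => Hca.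
rewrite -big_mkcond /= -big_filter -(big_map (madd c) xpredT (F c)).
apply: perm_big; apply: uniq_perm.
- by rewrite filter_uniq ?uniq_below.
- by rewrite map_inj_uniq ?uniq_below //; exact: madd_inj.
move=> e; rewrite mem_filter mem_below; apply/andP/mapP.
  move=> [Hce Hea]; exists (msub e c); last by rewrite maddBK.
  rewrite mem_below; apply/mleP=> i; rewrite ffunE.
  by move/mleP: Hce => /(_ i); move/mleP: Hea => /(_ i); mlia.
move=> [d]; rewrite mem_below => /mleP Hd ->; split; apply/mleP=> i; rewrite ffunE //.
  mlia.
by move/mleP: Hca => /(_ i); have := Hd i; rewrite ffunE; mlia.
Qed.

Lemma below_rev (R : nmodType) a (F : midx k -> R) :
  \sum_(c <- below a) F c = \sum_(c <- below a) F (msub a c).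
Proof.
rewrite -(big_map (msub a) xpredT F); apply: perm_big; apply: uniq_perm.
- exact: uniq_below.
- rewrite map_inj_in_uniq ?uniq_below // => x y; rewrite !mem_below => Hx Hy E.
  by rewrite -(msubK Hx) -(msubK Hy) E.
move=> c; apply/idP/mapP.
  rewrite mem_below => H; exists (msub a c); last by rewrite msubK.
  by rewrite mem_below; apply/mleP=> i; rewrite ffunE; mlia.
move=> [x _ ->]; rewrite mem_below; apply/mleP=> i; rewrite ffunE; mlia.
Qed.

Lemma below_rev2 (R : nmodType) a (F : midx k -> midx k -> R) :
  \sum_(c <- below a) F c (msub a c) = \sum_(c <- below a) F (msub a c) c.
Proof.
rewrite below_rev; apply: eq_big_seq => c; rewrite mem_below => H.
by rewrite msubK.
Qed.

Lemma shift_gen (R : nmodType) (s s' : seq (midx k)) i (F : midx k -> R) :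
  uniq s -> uniq s' ->
  (forall c, ((c \in s) && (c i != 0%N)) = (c \in map (fun x => madd x (munit i)) s')) ->
  \sum_(c <- s) F c *+ c i = \sum_(c <- s') F (madd c (munit i)) *+ (c i).+1.
Proof.
move=> us us' Hm.
rewrite (bigID (fun c => c i == 0%N)) /= [X in X + _]big1 ?add0r; last first.
  by move=> c /eqP ->.
rewrite -big_filter.
have -> : \sum_(c <- s') F (madd c (munit i)) *+ (c i).+1 =
          \sum_(c <- map (fun x => madd x (munit i)) s') F c *+ c i.
  rewrite big_map; apply: eq_bigr => c _; by rewrite !ffunE eqxx addn1.
apply: perm_big; apply: uniq_perm.
- by rewrite filter_uniq.
- by rewrite map_inj_uniq //; exact: maddr_inj.
by move=> c; rewrite mem_filter -Hm andbC.
Qed.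

Lemma below_shift (R : nmodType) a j (F : midx k -> R) :
  \sum_(c <- below (madd a (munit j))) F c *+ c j =
  \sum_(c <- below a) F (madd c (munit j)) *+ (c j).+1.
Proof.
apply: shift_gen; rewrite ?uniq_below // => c; rewrite mem_below.
apply/andP/mapP.
  move=> [/mleP H Hc]; exists (msub c (munit j)).
    rewrite mem_below; apply/mleP=> i; have := H i; rewrite !ffunE; case: eqP => [->|_]; move: Hc; mlia.
  apply/ffunP=> i; rewrite !ffunE; case: eqP => [->|_]; move: Hc; mlia.
move=> [c' +] ->; rewrite mem_below => /mleP H; split.
  apply/mleP=> i; have := H i; rewrite !ffunE; case: eqP; mlia.
by rewrite !ffunE eqxx; mlia.
Qed.

Lemma degbelow_shift (R : nmodType) a j i (F : midx k -> R) :
  \sum_(c <- degbelow (madd a (munit j))) F c *+ c i =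
  \sum_(c <- degbelow a) F (madd c (munit i)) *+ (c i).+1.
Proof.
apply: shift_gen; rewrite ?uniq_degbelow // => c; rewrite mem_degbelow.
rewrite mdegD mdeg_unit.
apply/andP/mapP.
  move=> [H Hc]; exists (msub c (munit i)).
    rewrite mem_degbelow mdegB; first by rewrite mdeg_unit; move: H; mlia.
    apply/mleP=> l; rewrite ffunE; case: eqP => [->|_]; move: Hc; mlia.
  apply/ffunP=> l; rewrite !ffunE; case: eqP => [->|_]; move: Hc; mlia.
move=> [c' +] ->; rewrite mem_degbelow => H; split.
  by rewrite mdegD mdeg_unit; move: H; mlia.
by rewrite !ffunE eqxx; mlia.
Qed.

End Reindex.

Definition PS k := ps k.
HB.instance Definition _ k := gen_eqMixin (PS k).
HB.instance Definition _ k := gen_choiceMixin (PS k).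

Section PSring.
Variable k : nat.
Implicit Types f g h : PS k.

Lemma psext (f g : ps k) : (forall a b, f a b = g a b) -> f = g.
Proof. move=> H; apply: funext => a; apply: funext => b; exact: H. Qed.

Definition psopp (f : PS k) : PS k := fun a b => - f a b.

Lemma psaddA : associative (@psadd k).
Proof. by move=> f g h; apply: psext => a b; rewrite /psadd addrA. Qed.
Lemma psaddC : commutative (@psadd k).
Proof. by move=> f g; apply: psext => a b; rewrite /psadd addrC. Qed.
Lemma psadd0 : left_id (@pszero k) (@psadd k).
Proof. by move=> f; apply: psext => a b; rewrite /psadd /pszero add0r. Qed.
Lemma psaddN : left_inverse (@pszero k) psopp (@psadd k).
Proof. by move=> f; apply: psext => a b; rewrite /psadd /pszero /psopp addNr. Qed.

HB.instance Definition _ := GRing.isZmodule.Build (PS k) psaddA psaddC psadd0 psaddN.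

Lemma psmulC : commutative (@psmul k).
Proof.
move=> f g; apply: psext => a b; rewrite /psmul.
rewrite (@below_rev2 _ _ a (fun a1 a2 => \sum_(b1 <- below b) f a1 b1 * g a2 (msub b b1))).
apply: eq_bigr => c _.
rewrite (@below_rev2 _ _ b (fun b1 b2 => f (msub a c) b1 * g c b2)).
by apply: eq_bigr => d _; rewrite mulrC.
Qed.

Lemma psmulA : associative (@psmul k).
Proof.
move=> f g h; apply: psext => a b; rewrite /psmul.
symmetry.
transitivity (\sum_(e <- below a) \sum_(c <- below e) \sum_(e' <- below b)
   \sum_(c' <- below e') f c c' * g (msub e c) (msub e' c') * h (msub a e) (msub b e')).
  apply: eq_bigr => e _; rewrite exchange_big /=; apply: eq_bigr => e' _.
  rewrite big_distrl /=; apply: eq_bigr => c _; rewrite big_distrl /=.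
  by apply: eq_bigr.
rewrite below_exch; apply: eq_bigr => c _.
under eq_bigr => d _ do rewrite below_exch.
rewrite exchange_big /=; apply: eq_bigr => c' _.
rewrite big_distrr /=; apply: eq_bigr => d _.
rewrite big_distrr /=; apply: eq_bigr => d' _.
by rewrite !maddK -!msubDA mulrA.
Qed.

Lemma psone_E (a b : midx k) :
  psone a b = if (a == mzero k) && (b == mzero k) then 1 else 0.
Proof. by rewrite /psone addn_eq0 !mdeg0. Qed.

Lemma mzero_below (a : midx k) : mzero k \in below a.
Proof. by rewrite mem_below; apply/mleP=> i; rewrite ffunE. Qed.

Lemma msub0 (a : midx k) : msub a (mzero k) = a.
Proof. by apply/ffunP=> i; rewrite !ffunE subn0. Qed.

Lemma psmul1 : left_id (@psone k) (@psmul k).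
Proof.
move=> f; apply: psext => a b; rewrite /psmul.
rewrite (@sumD1 _ _ _ (mzero k) _ (uniq_below a) (mzero_below a)); last first.
  move=> c _ /negbTE Hc; apply: big1 => d _; by rewrite psone_E Hc mul0r.
rewrite (@sumD1 _ _ _ (mzero k) _ (uniq_below b) (mzero_below b)); last first.
  move=> d _ /negbTE Hd; by rewrite psone_E Hd andbF mul0r.
by rewrite psone_E !eqxx mul1r !msub0.
Qed.

Lemma psmulDl : left_distributive (@psmul k) (@psadd k).
Proof.
move=> f g h; apply: psext => a b; rewrite /psmul /psadd -big_split /=.
apply: eq_bigr => c _; rewrite -big_split /=; apply: eq_bigr => d _; by rewrite mulrDl.
Qed.

Lemma psone_neq0 : (@psone k : PS k) != @pszero k.
Proof.
apply/eqP=> /(congr1 (fun f : PS k => f (mzero k) (mzero k))).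
by rewrite psone_E eqxx /pszero => /eqP; rewrite oner_eq0.
Qed.

HB.instance Definition _ := GRing.Zmodule_isComNzRing.Build (PS k)
  psmulA psmulC psmul1 psmulDl psone_neq0.

Lemma mulPS (f g : PS k) : f * g = psmul f g.
Proof. by []. Qed.
Lemma addPS (f g : PS k) : f + g = psadd f g.
Proof. by []. Qed.
Lemma onePS : (1 : PS k) = @psone k.
Proof. by []. Qed.
Lemma zeroPS : (0 : PS k) = @pszero k.
Proof. by []. Qed.

End PSring.



Section Coef.
Variable k : nat.
Implicit Types f g h : PS k.

Lemma pcD f g a b : (f + g) a b = f a b + g a b.
Proof. by []. Qed.
Lemma pc0 a b : (0 : PS k) a b = 0.
Proof. by []. Qed.
Lemma pcN f a b : (- f) a b = - f a b.
Proof. by []. Qed.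
Lemma pcB f g a b : (f - g) a b = f a b - g a b.
Proof. by []. Qed.
Lemma pcMn f n a b : (f *+ n) a b = f a b *+ n.
Proof. by elim: n => [|n IH]; rewrite ?mulr0n // !mulrS pcD IH. Qed.
Lemma pcsum (I : Type) (r : seq I) (P : pred I) (F : I -> PS k) a b :
  (\sum_(i <- r | P i) F i) a b = \sum_(i <- r | P i) F i a b.
Proof.
by apply: (big_morph (fun f : PS k => f a b)) => [f g|]; rewrite ?pcD ?pc0.
Qed.
Lemma pcM f g a b : (f * g) a b =
  \sum_(a1 <- below a) \sum_(b1 <- below b) f a1 b1 * g (msub a a1) (msub b b1).
Proof. by []. Qed.

Definition D (j : 'I_k) (f : PS k) : PS k := psderu j f.

Lemma pcDer j f a b : D j f a b = (a j).+1%:R * f (madd a (munit j)) b.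
Proof. by []. Qed.

Lemma DD j f g : D j (f + g) = D j f + D j g.
Proof. by apply: psext => a b; rewrite pcD !pcDer pcD mulrDr. Qed.
Lemma D0 j : D j 0 = 0.
Proof. by apply: psext => a b; rewrite pcDer pc0 mulr0. Qed.
Lemma DN j f : D j (- f) = - D j f.
Proof. by apply: psext => a b; rewrite pcN !pcDer pcN mulrN. Qed.

Lemma msubDD (a c : midx k) j : msub (madd a (munit j)) (madd c (munit j)) = msub a c.
Proof. by apply/ffunP=> i; mlia. Qed.

Lemma DM j f g : D j (f * g) = D j f * g + D j g * f.
Proof.
apply: psext => a b; rewrite pcD pcDer pcM !pcM.
set a' := madd a (munit j).
have E : forall c, c \in below a' ->
    (a j).+1%:R * \sum_(d <- below b) f c d * g (msub a' c) (msub b d) =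
    (\sum_(d <- below b) f c d * g (msub a' c) (msub b d)) *+ c j +
    (\sum_(d <- below b) f c d * g (msub a' c) (msub b d)) *+ (msub a' c) j.
  move=> c; rewrite mem_below => /mleP /(_ j) Hc.
  rewrite -mulrnDr mulr_natl; congr (_ *+ _).
  move: Hc; rewrite /a' !ffunE eqxx. mlia.
have H1 : \sum_(i <- below a')
     (\sum_(d <- below b) f i d * g (msub a' i) (msub b d)) *+ i j =
  \sum_(a1 <- below a)
     \sum_(b1 <- below b) D j f a1 b1 * g (msub a a1) (msub b b1).
  rewrite /a' below_shift; apply: eq_bigr => c _.
  rewrite msubDD -mulr_natl mulr_sumr; apply: eq_bigr => d _.
  by rewrite pcDer mulrA.
have H2 : \sum_(i <- below a')
     (\sum_(d <- below b) f i d * g (msub a' i) (msub b d)) *+ msub a' i j =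
  \sum_(a1 <- below a)
     \sum_(b1 <- below b) D j g a1 b1 * f (msub a a1) (msub b b1).
  rewrite below_rev.
  rewrite (eq_big_seq (fun c => (\sum_(d <- below b) f (msub a' c) d * g c (msub b d)) *+ c j)); last first.
    by move=> c; rewrite mem_below => H; rewrite msubK.
  rewrite /a' below_shift; apply: eq_bigr => c _.
  rewrite -mulr_natl mulr_sumr msubDD.
  rewrite (@below_rev2 _ _ b (fun d1 d2 => (c j).+1%:R * (f (msub a c) d1 * g (madd c (munit j)) d2))).
  apply: eq_bigr => d _.
  by rewrite pcDer [f _ _ * _]mulrC mulrA.
by rewrite -H1 -H2 mulr_sumr (eq_big_seq _ E) big_split.
Qed.

End Coef.



Section Ord.
Variable k : nat.
Implicit Types f g h : PS k.

Definition ordge f p := forall a b, (mdeg a < p)%N -> f a b = 0.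

Lemma ordgeM f g p q : ordge f p -> ordge g q -> ordge (f * g) (p + q).
Proof.
move=> Hf Hg a b Ha; rewrite pcM big1_seq // => c /andP[_]; rewrite mem_below => Hc.
apply: big1 => d _.
have := mdegB Hc.
have := mle_mdeg Hc.
case: (ltnP (mdeg c) p) => Hp; first by move=> *; rewrite Hf // mul0r.
move=> H1 H2; rewrite Hg ?mulr0 // H2; lia.
Qed.

Lemma ordge1 : ordge 1 0.
Proof. by []. Qed.

Lemma ordge_exp f n : ordge f 1 -> ordge (f ^+ n) n.
Proof.
move=> Hf; elim: n => [|n IH]; first by rewrite expr0.
by rewrite exprS -add1n; apply: ordgeM.
Qed.

Lemma ordge_prod (I : Type) (r : seq I) (F : I -> PS k) (p : I -> nat) :
  (forall i, ordge (F i) (p i)) -> ordge (\prod_(i <- r) F i) (\sum_(i <- r) p i).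
Proof.
move=> H; elim: r => [|x r IH]; first by rewrite !big_nil.
by rewrite !big_cons; apply: ordgeM.
Qed.

Lemma ordx_gtE f n : ordx_gt f n <-> ordge f n.+1.
Proof. by split=> H a b Ha; apply: H. Qed.

Lemma ordx_gtD f g n : ordx_gt f n -> ordx_gt g n -> ordx_gt (f + g) n.
Proof. by move=> Hf Hg a b Ha; rewrite pcD Hf ?Hg ?addr0. Qed.

Lemma ordx_gt0 n : ordx_gt (0 : PS k) n.
Proof. by []. Qed.

Lemma ordx_gt_sum (I : Type) (r : seq I) (F : I -> PS k) n :
  (forall i, ordx_gt (F i) n) -> ordx_gt (\sum_(i <- r) F i) n.
Proof.
move=> H; elim: r => [|x r IH]; first by rewrite big_nil.
by rewrite big_cons; apply: ordx_gtD.
Qed.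

Lemma ordx_gtMl f g n : ordx_gt f n -> ordx_gt (f * g) n.
Proof.
move=> Hf a b Ha; rewrite pcM big1_seq // => c /andP[_]; rewrite mem_below => Hc.
apply: big1 => d _; rewrite Hf ?mul0r //.
exact: leq_trans (mle_mdeg Hc) Ha.
Qed.

Lemma ordx_gtD_der j f n : ordx_gt f n.+1 -> ordx_gt (D j f) n.
Proof.
move=> Hf a b Ha; rewrite pcDer Hf ?mulr0 //.
by rewrite mdegD mdeg_unit addn1.
Qed.

Lemma ordx_gt_le f m n : (m <= n)%N -> ordx_gt f n -> ordx_gt f m.
Proof. by move=> Hmn Hf a b Ha; apply: Hf; exact: leq_trans Ha Hmn. Qed.

Lemma D1 j : D j (1 : PS k) = 0.
Proof.
apply: psext => a b; rewrite pcDer pc0 onePS psone_E.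
case: eqP => [/ffunP /(_ j)|]; last by rewrite mulr0.
by rewrite !ffunE eqxx addn1.
Qed.

Lemma Dexp j f n : D j (f ^+ n) = (f ^+ n.-1 * D j f) *+ n.
Proof.
elim: n => [|n IH]; first by rewrite expr0 D1 mulr0n.
case: n IH => [|n] IH; rewrite exprS DM IH /=.
  by rewrite !expr0 mulr0n mul0r addr0 mul1r mulr1 mulr1n.
by rewrite mulrnAl -mulrA [D j f * f]mulrC mulrA -exprSr [in RHS]mulrS [D j f * _]mulrC.
Qed.

End Ord.



Section Mpow.
Variable k : nat.
Variable A : 'I_k -> PS k.

Definition Q (r : seq 'I_k) (al : midx k) : PS k := \prod_(i <- r) A i ^+ al i.

Lemma Q_eq r (al al' : midx k) : (forall i, i \in r -> al i = al' i) -> Q r al = Q r al'.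
Proof. by move=> H; apply: eq_big_seq => i /H ->. Qed.

Lemma DQ j (r : seq 'I_k) (al : midx k) : uniq r ->
  D j (Q r al) = \sum_(i <- r) (Q r (msub al (munit i)) * D j (A i)) *+ al i.
Proof.
elim: r => [|x r IH] /=; first by rewrite /Q !big_nil D1.
move=> /andP[xr ur].
rewrite /Q !big_cons -/(Q r al) DM IH // Dexp.
have E1 : Q r (msub al (munit x)) = Q r al.
  apply: Q_eq => i ir; rewrite !ffunE.
  have -> : (i == x) = false by apply/negbTE; apply: contraNneq xr => <-.
  by rewrite subn0.
have E2 : forall i, i \in r ->
  (\prod_(i0 <- x :: r) A i0 ^+ msub al (munit i) i0 * D j (A i)) *+ al i =
  A x ^+ al x * ((Q r (msub al (munit i)) * D j (A i)) *+ al i).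
  move=> i ir; rewrite big_cons -/(Q r _) mulrnAr mulrA; congr (_ * _ *+ _).
  have -> : msub al (munit i) x = al x; last by [].
  rewrite !ffunE; have -> : (x == i) = false by apply/negbTE; apply: contraNneq xr => ->.
  by rewrite subn0.
rewrite (eq_big_seq _ E2) -mulr_sumr -/(Q r (msub al (munit x))) E1.
have -> : msub al (munit x) x = (al x).-1 by rewrite !ffunE eqxx subn1.
rewrite [X in _ = _ + X]mulrC; congr (_ + _).
by rewrite !mulrnAl; congr (_ *+ _); rewrite mulrAC.
Qed.

Lemma psexpE (f : PS k) n : psexp f n = f ^+ n.
Proof. by elim: n => // n IH; rewrite exprS -IH. Qed.

Lemma mpowE (al : midx k) : mpow A al = Q (index_enum 'I_k) al.
Proof.
rewrite /mpow /Q; transitivity (\big[@psmul k/@psone k]_(i < k) (A i ^+ al i)).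
  by apply: eq_bigr => i _; exact: psexpE.
by [].
Qed.

Lemma Dmpow j (al : midx k) :
  D j (mpow A al) = \sum_(i < k) ((mpow A (msub al (munit i)) : PS k) * D j (A i)) *+ al i.
Proof.
rewrite mpowE DQ ?index_enum_uniq //; apply: eq_bigr => i _; by rewrite mpowE.
Qed.

Lemma ordge_mpow (al : midx k) : (forall i, ordge (A i) 1) -> ordge (mpow A al) (mdeg al).
Proof.
move=> H; rewrite mpowE /Q /mdeg; apply: ordge_prod => i; exact: ordge_exp.
Qed.

Lemma mpow0 : mpow A (mzero k) = (1 : PS k).
Proof. by rewrite mpowE /Q big1 // => i _; rewrite ffunE expr0. Qed.

End Mpow.



Section Comp.
Variable k : nat.
Variable A : 'I_k -> PS k.
Hypothesis HA : forall i, ordge (A i) 1.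

Lemma pscomp_ext (psi : PS k) (a a' b : midx k) : (mdeg a <= mdeg a')%N ->
  pscomp psi A a b =
  \sum_(al <- degbelow a') \sum_(be <- below b) psi al be * mpow A al a (msub b be).
Proof.
move=> Haa; rewrite /pscomp; apply: big_supp; rewrite ?uniq_degbelow // => al Hnz.
have Hal : (mdeg al <= mdeg a)%N.
  rewrite leqNgt; apply/negP => Hlt; move/eqP: Hnz; apply.
  by apply: big1 => be _; rewrite ordge_mpow ?mulr0.
by rewrite !mem_degbelow Hal (leq_trans Hal Haa).
Qed.

Lemma pscompM (phi E : PS k) (a b : midx k) :
  ((pscomp phi A : PS k) * E) a b =
  \sum_(al <- degbelow a) \sum_(be <- below b)
     phi al be * (((mpow A al : PS k) * E) a (msub b be)).
Proof.
rewrite pcM.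
transitivity (\sum_(c <- below a) \sum_(d <- below b) \sum_(al <- degbelow a)
   \sum_(be <- below d) phi al be * (mpow A al c (msub d be) * E (msub a c) (msub b d))).
  apply: eq_big_seq => c; rewrite mem_below => Hc; apply: eq_bigr => d _.
  rewrite (@pscomp_ext phi c a d (mle_mdeg Hc)) mulr_suml; apply: eq_bigr => al _.
  rewrite mulr_suml; apply: eq_bigr => be _; by rewrite mulrA.
under eq_bigr => c _ do rewrite exchange_big.
rewrite exchange_big; apply: eq_bigr => al _.
under eq_bigr => c _ do rewrite below_exch.
rewrite exchange_big; apply: eq_bigr => be _.
rewrite pcM mulr_sumr; apply: eq_bigr => c _.
rewrite mulr_sumr; apply: eq_bigr => d _.
by rewrite maddK -msubDA.
Qed.

Lemma maddKr (c : midx k) j : msub (madd c (munit j)) (munit j) = c.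
Proof. by apply/ffunP=> i; mlia. Qed.

Lemma chain (psi : PS k) j :
  D j (pscomp psi A) = \sum_(i < k) (pscomp (D i psi) A : PS k) * D j (A i).
Proof.
apply: psext => a b; rewrite pcsum pcDer.
transitivity (\sum_(al <- degbelow (madd a (munit j))) \sum_(be <- below b)
   psi al be * (D j (mpow A al)) a (msub b be)).
  rewrite /pscomp mulr_sumr; apply: eq_bigr => al _.
  rewrite mulr_sumr; apply: eq_bigr => be _.
  by rewrite pcDer mulrCA.
transitivity (\sum_(i < k) \sum_(al <- degbelow (madd a (munit j)))
   (\sum_(be <- below b) psi al be *
       (((mpow A (msub al (munit i)) : PS k) * D j (A i)) a (msub b be))) *+ al i).
  rewrite [RHS]exchange_big /=; apply: eq_bigr => al _.
  rewrite (eq_bigr (fun i => \sum_(be <- below b) (psi al be *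
       (((mpow A (msub al (munit i)) : PS k) * D j (A i)) a (msub b be))) *+ al i)); last first.
    by move=> i _; rewrite sumrMnl.
  rewrite [RHS]exchange_big /=; apply: eq_bigr => be _.
  rewrite Dmpow pcsum mulr_sumr; apply: eq_bigr => i _.
  by rewrite pcMn mulrnAr.
apply: eq_bigr => i _.
rewrite pscompM degbelow_shift; apply: eq_bigr => al _.
rewrite maddKr -sumrMnl; apply: eq_bigr => be _.
by rewrite pcDer -mulrnAl -mulr_natl.
Qed.

Lemma pscomp0 (psi : PS k) (b : midx k) : pscomp psi A (mzero k) b = psi (mzero k) b.
Proof.
rewrite /pscomp (@sumD1 _ _ _ (mzero k) _ (uniq_degbelow _)); last first.
- move=> al; rewrite mem_degbelow => H /negP []; rewrite -mdeg0.
  by move: H; rewrite (_ : mdeg (mzero k) = 0%N) ?leqn0 //; apply/eqP; rewrite mdeg0.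
- by rewrite mem_degbelow.
rewrite mpow0 (@sumD1 _ _ _ b _ (uniq_below _)); last first.
- move=> be; rewrite mem_below => /mleP H Hne.
  rewrite onePS psone_E eqxx /= ifF ?mulr0 //; apply/negP=> /eqP E.
  move/negP: Hne; apply; apply/eqP/ffunP=> i; move/ffunP: E => /(_ i).
  have := H i; mlia.
- by rewrite mem_below mle_refl.
rewrite onePS psone_E eqxx /=.
have -> : msub b b = mzero k by apply/ffunP=> i; rewrite !ffunE subnn.
by rewrite eqxx mulr1.
Qed.

End Comp.



Lemma ex_min (P : nat -> Prop) n : P n -> exists m, P m /\ forall j, P j -> (m <= j)%N.
Proof.
elim: n {-2}n (leqnn n) => [|N IH] n Hn Pn.
  exists n; split=> // j _; move: Hn; rewrite leqn0 => /eqP ->; exact: leq0n.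
case: (classic (exists j, (j < n)%N /\ P j)) => [[j [Hj Pj]]|H].
  by apply: (IH j) => //; lia.
exists n; split=> // j Pj; rewrite leqNgt; apply/negP => Hj; apply: H; by exists j.
Qed.

Lemma digits_inj M n (f g : nat -> nat) :
  (forall i, (i < n)%N -> (f i < M)%N) -> (forall i, (i < n)%N -> (g i < M)%N) ->
  (\sum_(i < n) f i * M ^ i = \sum_(i < n) g i * M ^ i)%N ->
  forall i, (i < n)%N -> f i = g i.
Proof.
elim: n f g => [|n IH] f g Hf Hg E i Hi //.
have HM : (0 < M)%N by have := Hf 0%N isT; lia.
move: E; rewrite !big_ord_recl /= !expn0 !muln1.
have E2 : forall h : nat -> nat, (\sum_(i0 < n) h (bump 0 i0) * M ^ bump 0 i0 =
    M * \sum_(i0 < n) h i0.+1 * M ^ i0)%N.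
  move=> h; rewrite big_distrr /=; apply: eq_bigr => j _.
  by rewrite /bump /= add1n expnS mulnCA.
rewrite !E2 => E.
have E0 : f 0%N = g 0%N.
  have := congr1 (fun x => x %% M)%N E; rewrite /= ![(_ + M * _)%N]addnC.
  rewrite ![(M * _)%N]mulnC !modnMDl !modn_small //; [exact: Hg | exact: Hf].
case: i Hi => [|i] Hi //.
have E1 : (\sum_(i0 < n) f i0.+1 * M ^ i0 = \sum_(i0 < n) g i0.+1 * M ^ i0)%N.
  move: E; rewrite E0 => /eqP; rewrite eqn_add2l eqn_mul2l => /orP[/eqP HM0|/eqP //].
  by rewrite HM0 in HM.
apply: (IH (fun j => f j.+1) (fun j => g j.+1)) => //.
- by move=> j Hj; apply: Hf.
- by move=> j Hj; apply: Hg.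
Qed.

Section Dom.
Variable k : nat.
Implicit Types f g h : PS k.

Definition wt M (x : midx k) : nat := (\sum_(i < k) x i * M ^ i)%N.

Lemma wtD M (x y : midx k) : wt M (madd x y) = (wt M x + wt M y)%N.
Proof. by rewrite /wt -big_split; apply: eq_bigr => i _; rewrite ffunE mulnDl. Qed.

Lemma maddC (x y : midx k) : madd x y = madd y x.
Proof. by apply/ffunP=> i; rewrite !ffunE addnC. Qed.

Lemma wtB M (x y : midx k) : mle y x -> (wt M (msub x y) + wt M y)%N = wt M x.
Proof. by move=> H; rewrite -wtD maddC maddBK. Qed.

Lemma wt_inj M (x y : midx k) : (forall i, x i < M)%N -> (forall i, y i < M)%N ->
  wt M x = wt M y -> x = y.
Proof.
move=> Hx Hy E; apply/ffunP=> i.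
have H := @digits_inj M k (fun n => x (insubd i n)) (fun n => y (insubd i n)).
have := H _ _ _ i (ltn_ord i); rewrite valKd; apply.
- by move=> j _; apply: Hx.
- by move=> j _; apply: Hy.
rewrite /wt in E.
rewrite (eq_bigr (fun j : 'I_k => x j * M ^ j)%N); last by move=> j _; rewrite valKd.
by rewrite E; apply: eq_bigr => j _; rewrite valKd.
Qed.


Lemma lead1 f : (exists a b, f a b != 0) ->
  exists p, (exists a b, mdeg a = p /\ f a b != 0) /\
            (forall a b, f a b != 0 -> (p <= mdeg a)%N).
Proof.
move=> [a [b H]].
have [p [[a1 [b1 [E1 H1]]] Hmin]] :=
  @ex_min (fun p => exists a b, mdeg a = p /\ f a b != 0) (mdeg a) (ex_intro _ a (ex_intro _ b (conj erefl H))).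
exists p; split; first by exists a1, b1.
by move=> a2 b2 H2; apply: Hmin; exists a2, b2.
Qed.

Lemma lead2 f p M : (exists a b, mdeg a = p /\ f a b != 0) ->
  exists af, mdeg af = p /\ (exists b, f af b != 0) /\
    (forall a b, f a b != 0 -> mdeg a = p -> (wt M af <= wt M a)%N).
Proof.
move=> [a [b [E H]]].
have [w [[a1 [b1 [E1 [H1 W1]]]] Hmin]] :=
  @ex_min (fun w => exists a b, mdeg a = p /\ f a b != 0 /\ wt M a = w) (wt M a)
    (ex_intro _ a (ex_intro _ b (conj E (conj H erefl)))).
exists a1; split=> //; split; first by exists b1.
by move=> a2 b2 H2 E2; rewrite W1; apply: Hmin; exists a2, b2.
Qed.

Lemma lead3 f af : (exists b, f af b != 0) ->
  exists s, (exists b, mdeg b = s /\ f af b != 0) /\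
            (forall b, f af b != 0 -> (s <= mdeg b)%N).
Proof.
move=> [b H].
have [p [[b1 [E1 H1]] Hmin]] :=
  @ex_min (fun p => exists b, mdeg b = p /\ f af b != 0) (mdeg b) (ex_intro _ b (conj erefl H)).
exists p; split; first by exists b1.
by move=> b2 H2; apply: Hmin; exists b2.
Qed.

Lemma lead4 f af s M : (exists b, mdeg b = s /\ f af b != 0) ->
  exists bf, mdeg bf = s /\ f af bf != 0 /\
    (forall b, f af b != 0 -> mdeg b = s -> (wt M bf <= wt M b)%N).
Proof.
move=> [b [E H]].
have [w [[b1 [E1 [H1 W1]]] Hmin]] :=
  @ex_min (fun w => exists b, mdeg b = s /\ f af b != 0 /\ wt M b = w) (wt M b)
    (ex_intro _ b (conj E (conj H erefl))).
exists b1; split=> //; split=> //.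
by move=> b2 H2 E2; rewrite W1; apply: Hmin; exists b2.
Qed.

Lemma mle_madd (x y : midx k) : mle x (madd x y).
Proof. by apply/mleP=> i; rewrite ffunE leq_addr. Qed.

Lemma lt_mdeg (x : midx k) M i : (mdeg x < M)%N -> (x i < M)%N.
Proof. by move=> H; exact: leq_ltn_trans (le_mdeg x i) H. Qed.

Lemma split_unique (x y c : midx k) M (P Q : midx k -> bool) :
  (mdeg x + mdeg y < M)%N -> mle c (madd x y) ->
  P c -> Q (msub (madd x y) c) ->
  (forall a, P a -> (mdeg x <= mdeg a)%N) ->
  (forall a, P a -> mdeg a = mdeg x -> (wt M x <= wt M a)%N) ->
  (forall a, Q a -> (mdeg y <= mdeg a)%N) ->
  (forall a, Q a -> mdeg a = mdeg y -> (wt M y <= wt M a)%N) ->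
  c = x.
Proof.
move=> HM Hc Pc Qc H1 H2 H3 H4.
have Ed := mdegB Hc; rewrite mdegD in Ed.
have L1 := H1 _ Pc; have L2 := H3 _ Qc.
have Hcd := mle_mdeg Hc; rewrite mdegD in Hcd.
have D1 : mdeg c = mdeg x by lia.
have D2 : mdeg (msub (madd x y) c) = mdeg y by lia.
have W1 := H2 _ Pc D1; have W2 := H4 _ Qc D2.
have W := wtB M Hc; rewrite wtD in W.
apply: (wt_inj (M := M)).
- by move=> i; apply: lt_mdeg; lia.
- by move=> i; apply: lt_mdeg; lia.
lia.
Qed.


Lemma lead_mul f g af ag bf bg Ma Mb :
 (mdeg af + mdeg ag < Ma)%N -> (mdeg bf + mdeg bg < Mb)%N ->
 (forall a b, f a b != 0 -> (mdeg af <= mdeg a)%N) ->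
 (forall a b, f a b != 0 -> mdeg a = mdeg af -> (wt Ma af <= wt Ma a)%N) ->
 (forall b, f af b != 0 -> (mdeg bf <= mdeg b)%N) ->
 (forall b, f af b != 0 -> mdeg b = mdeg bf -> (wt Mb bf <= wt Mb b)%N) ->
 (forall a b, g a b != 0 -> (mdeg ag <= mdeg a)%N) ->
 (forall a b, g a b != 0 -> mdeg a = mdeg ag -> (wt Ma ag <= wt Ma a)%N) ->
 (forall b, g ag b != 0 -> (mdeg bg <= mdeg b)%N) ->
 (forall b, g ag b != 0 -> mdeg b = mdeg bg -> (wt Mb bg <= wt Mb b)%N) ->
 (f * g) (madd af ag) (madd bf bg) = f af bf * g ag bg.
Proof.
move=> HMa HMb F1 F2 F3 F4 G1 G2 G3 G4.
rewrite pcM (@sumD1 _ _ _ af _ (uniq_below _)); last first.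
- move=> c; rewrite mem_below => Hc Hne; apply: big1 => d _.
  case: (eqVneq (f c d) 0) => [->|Hf]; first by rewrite mul0r.
  case: (eqVneq (g (msub (madd af ag) c) (msub (madd bf bg) d)) 0) => [->|Hg].
    by rewrite mulr0.
  exfalso; move/eqP: Hne; apply.
  apply: (@split_unique af ag c Ma (fun a => f a d != 0)
            (fun a => g a (msub (madd bf bg) d) != 0)) => //.
  + by move=> a Ha; apply: F1 Ha.
  + by move=> a Ha; apply: F2 Ha.
  + by move=> a Ha; apply: G1 Ha.
  + by move=> a Ha; apply: G2 Ha.
- by rewrite mem_below mle_madd.
rewrite maddK (@sumD1 _ _ _ bf _ (uniq_below _)); last first.
- move=> d; rewrite mem_below => Hd Hne.
  case: (eqVneq (f af d) 0) => [->|Hf]; first by rewrite mul0r.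
  case: (eqVneq (g ag (msub (madd bf bg) d)) 0) => [->|Hg].
    by rewrite mulr0.
  exfalso; move/eqP: Hne; apply.
  apply: (@split_unique bf bg d Mb (fun b => f af b != 0)
            (fun b => g ag b != 0)) => //.
- by rewrite mem_below mle_madd.
by rewrite maddK.
Qed.

Lemma not_ordx f n : ~ ordx_gt f n -> exists a b, (mdeg a <= n)%N /\ f a b != 0.
Proof.
move=> H; apply: NNPP => H1; apply: H => a b Ha; apply/eqP; apply: negbNE; apply/negP => Hn.
by apply: H1; exists a, b.
Qed.

Lemma ord_dom (d h : PS k) nu m : ~ ordx_gt d nu -> ordx_gt (d * h) (nu + m) -> ordx_gt h m.
Proof.
move=> Hd Hdh; apply: NNPP => Hh.
have [a1 [b1 [Ha1 Hn1]]] := not_ordx Hd.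
have [a2 [b2 [Ha2 Hn2]]] := not_ordx Hh.
have [pd [Pd Pdmin]] := @lead1 d (ex_intro _ a1 (ex_intro _ b1 Hn1)).
have [ph [Ph Phmin]] := @lead1 h (ex_intro _ a2 (ex_intro _ b2 Hn2)).
set Ma := (pd + ph).+1.
have [af [Eaf [Hbf Waf]]] := @lead2 d pd Ma Pd.
have [ag [Eag [Hbg Wag]]] := @lead2 h ph Ma Ph.
have [sd [Sd Sdmin]] := @lead3 d af Hbf.
have [sh [Sh Shmin]] := @lead3 h ag Hbg.
set Mb := (sd + sh).+1.
have [bf [Ebf [Nf Wbf]]] := @lead4 d af sd Mb Sd.
have [bg [Ebg [Ng Wbg]]] := @lead4 h ag sh Mb Sh.
have E := @lead_mul d h af ag bf bg Ma Mb.
have Hpd : (pd <= nu)%N by apply: leq_trans (Pdmin _ _ Hn1) Ha1.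
have Hph : (ph <= m)%N by apply: leq_trans (Phmin _ _ Hn2) Ha2.
have Hle : (mdeg (madd af ag) <= nu + m)%N by rewrite mdegD Eaf Eag leq_add.
have := Hdh (madd af ag) (madd bf bg) Hle.
rewrite E; first last.
- by move=> b Hb Eb; apply: Wbg => //; rewrite Eb Ebg.
- by move=> b Hb; rewrite Ebg; apply: Shmin.
- by move=> a b Hb Ea; apply: Wag Hb _; rewrite Ea Eag.
- by move=> a b Hb; rewrite Eag; apply: Phmin Hb.
- by move=> b Hb Eb; apply: Wbf => //; rewrite Eb Ebf.
- by move=> b Hb; rewrite Ebf; apply: Sdmin.
- by move=> a b Hb Ea; apply: Waf Hb _; rewrite Ea Eaf.
- by move=> a b Hb; rewrite Eaf; apply: Pdmin Hb.
- by rewrite /Mb Ebf Ebg.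
- by rewrite /Ma Eaf Eag.
by move/eqP; rewrite mulf_eq0 (negbTE Nf) (negbTE Ng).
Qed.

End Dom.

Import Num.Theory.
Lemma natCC n : (n.+1)%:R != (0:CC).
Proof. have := @pnatr_eq0 (complex Rdefinitions.R) n.+1. simpl. move=> ->. done. Qed.

Section Main.
Variable k : nat.
Variable A : 'I_k -> PS k.

Definition J : 'M[PS k]_k := \matrix_(i, j) D j (A i).

Lemma jacdetE : jacdet A = \det J.
Proof.
rewrite /jacdet; transitivity (\big[@psadd k/@pszero k]_(s : 'S_k)
   ((-1) ^+ s * \prod_i J i (s i))); last by [].
apply: eq_bigr => s _.
have -> : \prod_i J i (s i) = \big[@psmul k/@psone k]_(i < k) psderu (s i) (A i).
  by apply: eq_bigr => i _; rewrite mxE.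
case: (odd_perm s) => /=; apply: psext => a b.
  by rewrite expr1 mulN1r /psscale pcN mulN1r.
by rewrite expr0 mul1r /psscale mul1r.
Qed.

Lemma cramer (psi : PS k) (HA : forall i, ordge (A i) 1) i :
  \det J * (pscomp (D i psi) A : PS k) =
  \sum_j D j (pscomp psi A) * \adj J j i.
Proof.
set H : 'rV[PS k]_k := \row_i (pscomp (D i psi) A : PS k).
set G : 'rV[PS k]_k := \row_j D j (pscomp psi A).
have EG : G = H *m J.
  apply/rowP=> j; rewrite !mxE chain //; apply: eq_bigr => l _; by rewrite !mxE.
have E1 : (G *m \adj J) ord0 i = \sum_j D j (pscomp psi A) * \adj J j i.
  by rewrite mxE; apply: eq_bigr => j _; rewrite mxE.
have E2 : (\det J *: H) ord0 i = \det J * (pscomp (D i psi) A : PS k).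
  by rewrite !mxE.
by rewrite -E1 -E2 EG -mulmxA mul_mx_adj mul_mx_scalar.
Qed.

End Main.

Theorem lemma4p13 (k : nat) (A : 'I_k -> ps k) (nu : nat) :
  ps_nonzero (jacdet A) ->
  (forall (i : 'I_k) (b : midx k), A i (@mzero k) b = 0) ->
  ~ ordx_gt (jacdet A) nu ->
  forall (r : nat) (psi : ps k),
    ordx_gt (pscomp psi A) (r * (nu + 1))%N ->
    ordx_gt psi r.
Proof.
move=> _ HA0 Hjac r.
have HA : forall i, ordge (A i : PS k) 1.
  move=> i a b; rewrite ltnS leqn0 mdeg0 => /eqP ->; exact: HA0.
have H0 : forall psi : PS k, ordx_gt (pscomp psi A) 0 -> forall b, psi (mzero k) b = 0.
  move=> psi H b; rewrite -(@pscomp0 k A); apply: H.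
  by rewrite leqn0 mdeg0.
elim: r => [|r IH] psi Hc.
  move=> a b; rewrite leqn0 mdeg0 => /eqP ->; apply: H0.
  by rewrite mul0n in Hc.
have Hc0 : ordx_gt (pscomp psi A) 0 by apply: ordx_gt_le Hc.
have HD : forall i, ordx_gt (D i psi) r.
  move=> i; apply: IH.
  apply: (@ord_dom k (\det (J A)) _ nu); first by rewrite -jacdetE.
  rewrite cramer //; apply: ordx_gt_sum => j; apply: ordx_gtMl.
  apply: ordx_gtD_der; move: Hc; rewrite mulSn.
  by rewrite (_ : ((nu + 1) + r * (nu + 1) = (nu + r * (nu + 1)).+1)%N) //; lia.
move=> a b Ha.
case: (eqVneq a (mzero k)) => [->|Hne]; first exact: H0.
have [i Hi] : exists i, a i != 0%N.
  apply: NNPP => H; move/eqP: Hne; apply; apply/ffunP => i; rewrite ffunE.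
  by apply/eqP; apply: negbNE; apply/negP => Hi; apply: H; exists i.
set a' := msub a (munit i).
have Ea : madd a' (munit i) = a.
  by apply/ffunP=> l; rewrite !ffunE; case: eqP => [->|_]; move: Hi; mlia.
have Hd : (mdeg a' <= r)%N.
  rewrite /a' mdegB ?mdeg_unit; first by lia.
  by apply/mleP=> l; rewrite ffunE; case: eqP => [->|_]; move: Hi; mlia.
have := HD i a' b Hd; rewrite pcDer Ea => /eqP; rewrite mulf_eq0 (negbTE (natCC _)) /=.
by move/eqP.
Qed.
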